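(* Let $n,m\ge 2$ be integers and let $P_n,P_m$ be paths on $n$ and $m$ vertices. Then $AT(P_n+_S P_m)=2$ if $n=m=2$, and $AT(P_n+_S P_m)=3$ otherwise.
   Context: For an orientation $D$, a subdigraph is Eulerian if every vertex has equal in- and outdegree in it; $D$ is an AT-orientation if the numbers of Eulerian subgraphs with an even and with an odd number of arcs differ; $AT(G)$ is the smallest $k$ such that $G$ has an AT-orientation of maximum outdegree at most $k-1$. $S(G)$ is obtained from $G$ by subdividing each edge once, with vertex set identified with $V(G)\cup E(G)$. $G+_S H$ has vertex set $(V(G)\cup E(G))\times V(H)$, with $(u_1,u_2)\sim(v_1,v_2)$ iff [$u_1=v_1\in V(G)$ and $u_2v_2\in E(H)$] or [$u_2=v_2$ and $u_1v_1\in E(S(G))$]. *)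

(* Defs.v *)
(* Simple graphs are given as a vertex finType with an
   adjacency relation (assumed symmetric and irreflexive). *)
From mathcomp Require Import all_boot.
Set Implicit Arguments. Unset Strict Implicit. Unset Printing Implicit Defensive.

Section Defs.
Variable T : finType.
Variable adj : rel T.

Definition is_orientation (D : rel T) : Prop :=
  (forall x y, D x y -> adj x y) /\ (forall x y, adj x y -> D x y != D y x).

Definition arcs (D : rel T) : {set T * T} := [set a | D a.1 a.2].

Definition eulerian (D : rel T) (A : {set T * T}) : bool :=
  (A \subset arcs D) &&
  [forall v, #|[set a in A | a.1 == v]| == #|[set a in A | a.2 == v]|].

Definition AT_orientation (D : rel T) : bool :=
  #|[set A | eulerian D A & ~~ odd #|A| ]| != #|[set A | eulerian D A & odd #|A| ]|.

Definition outdeg (D : rel T) (x : T) : nat := #|[set y | D x y]|.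

Definition has_AT_orientation_lt (k : nat) : Prop :=
  exists D, is_orientation D /\ AT_orientation D /\ forall x, outdeg D x < k.

Definition AT_number_is (k : nat) : Prop :=
  has_AT_orientation_lt k /\ forall j, j < k -> ~ has_AT_orientation_lt j.

Definition is_edge (e : {set T}) : bool :=
  [exists u, exists v, adj u v && (e == [set u; v])].

Definition edgeT := {e : {set T} | is_edge e}.

Definition subdiv_adj : rel (T + edgeT) := fun a b =>
  match a, b with
  | inl v, inr e => v \in val e
  | inr e, inl v => v \in val e
  | _, _ => false
  end.
End Defs.

Definition sumS_adj (T : finType) (adj : rel T) (W : finType) (adjH : rel W)
  : rel ((T + edgeT adj) * W) := fun x y =>
  (match x.1, y.1 with
   | inl u, inl v => (u == v) && adjH x.2 y.2
   | _, _ => false end)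
  || ((x.2 == y.2) && subdiv_adj x.1 y.1).

Definition path_adj (n : nat) : rel 'I_n := fun i j =>
  (i.+1 == j :> nat) || (j.+1 == i :> nat).
Arguments path_adj n : clear implicits.
Arguments sumS_adj {T} adj {W} adjH _ _.
Arguments subdiv_adj {T} adj _ _.

(* Main.v *)
Require Import Defs.
From mathcomp Require Import all_boot zify.
Set Implicit Arguments. Unset Strict Implicit. Unset Printing Implicit Defensive.

Section Generic.
Variable T : finType.

Lemma rank_orient (adj : rel T) (r : T -> nat) :
  (forall x y, adj x y = adj y x) -> (forall x y, adj x y -> r x != r y) ->
  is_orientation adj (fun x y => adj x y && (r x < r y)).
Proof.
move=> sym neq; split=> x y; first by case/andP.
move=> a; rewrite a -sym a /=; have := neq _ _ a.
by case: ltngtP.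
Qed.

Lemma rank_AT (D : rel T) (r : T -> nat) :
  (forall x y, D x y -> r x < r y) -> AT_orientation D.
Proof.
move=> Dr.
have E0 : forall A, eulerian D A -> A = set0.
  move=> A /andP[/subsetP sub /forallP eqc].
  apply/eqP; apply: contraT => /set0Pn[a0 Ha0].
  case: (arg_maxnP (fun a : T * T => r a.2) Ha0) => a Ha amax.
  have : 0 < #|[set b in A | b.2 == a.2]|.
    by apply/card_gt0P; exists a; rewrite inE eqxx andbT.
  rewrite -(eqP (eqc a.2)) => /card_gt0P[b]; rewrite inE => /andP[Hb /eqP b1].
  have := amax b Hb; have := sub b Hb; rewrite inE => /Dr.
  by rewrite b1 => lt /=; rewrite leqNgt lt.
rewrite /AT_orientation.
have -> : [set A : {set T * T} | eulerian D A & odd #|A|] = set0.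
  by apply/setP=> A; rewrite !inE; apply/negbTE/andP=> [[/E0 -> ]]; rewrite cards0.
have -> : [set A : {set T * T} | eulerian D A & ~~ odd #|A|] = [set set0].
  apply/setP=> A; rewrite !inE; apply/andP/eqP=> [[/E0 ->//]|->].
  rewrite cards0; split=> //; apply/andP; split; first exact: sub0set.
  by apply/forallP=> v; apply/eqP; apply: eq_card => a; rewrite !inE.
by rewrite cards1 cards0.
Qed.

Lemma uniq_map_key (A B C : eqType) (f : A -> B) (g : A -> C) (s : seq A) :
  {in s &, forall p q, f p = f q -> g p = g q} -> uniq (map g s) -> uniq (map f s).
Proof.
elim: s => // a s IH H /= /andP[ga us]; apply/andP; split; last first.
  by apply: IH => // p q ps qs; apply: H; rewrite inE ?ps ?qs orbT.
apply/mapP=> [[q qs fq]]; move/negP: ga; apply; apply/mapP; exists q => //.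
by apply: H; rewrite ?inE ?eqxx ?qs ?orbT.
Qed.

Lemma pigeon (adj D : rel T) (psi : T -> nat) (E : seq (T * T)) (V : seq T) :
  is_orientation adj D -> (forall x, outdeg D x < 2) ->
  (forall p, p \in E -> adj p.1 p.2) ->
  (forall p, p \in E -> (p.1 \in V) && (p.2 \in V)) ->
  uniq [seq (minn (psi p.1) (psi p.2), maxn (psi p.1) (psi p.2)) | p <- E] ->
  size V < size E -> False.
Proof.
move=> [_ orD] od adjE inV uk.
pose t p := if D p.1 p.2 then p.1 else p.2.
pose h p := if D p.1 p.2 then p.2 else p.1.
have F1 : forall p, p \in E -> D (t p) (h p).
  move=> p /adjE /orD; rewrite /t /h; case E1: (D p.1 p.2) => //=; by case: (D p.2 p.1).
have F2 : forall p, (minn (psi p.1) (psi p.2), maxn (psi p.1) (psi p.2)) =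
   (minn (psi (t p)) (psi (h p)), maxn (psi (t p)) (psi (h p))).
  by move=> p; rewrite /t /h; case: (D _ _) => //; rewrite minnC maxnC.
have U : uniq (map t E).
  apply: (uniq_map_key _ uk) => p q pE qE tpq; rewrite !F2 tpq.
  have := od (t q); rewrite ltnS /outdeg => /card_le1_eqP Hc.
  have -> // : h p = h q.
  by apply: Hc; rewrite inE; [exact: F1 | rewrite -tpq; exact: F1].
have := uniq_leq_size U; rewrite size_map => H.
have : size E <= size V.
  apply: H => x /mapP[p pE ->]; have := inV _ pE; rewrite /t.
  by case/andP=> a b; case: (D _ _).
by rewrite leqNgt => /negP.
Qed.

Lemma cyc_AT (f : T -> T) : (forall x y, exists k, iter k f x = y) -> ~~ odd #|T| ->
  AT_orientation (fun x y => y == f x).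
Proof.
move=> conn ev.
set D := (fun x y => y == f x).
have arcsE : arcs D = [set (x, f x) | x in T].
  apply/setP=> -[x y]; rewrite inE /D /=; apply/eqP/imsetP=> [->|[z _ [-> ->]]] //.
  by exists x.
have carcs : #|arcs D| = #|T|.
  by rewrite arcsE card_imset // => x y [].
have EA : forall A, eulerian D A -> A = set0 \/ A = arcs D.
  move=> A /andP[/subsetP sub /forallP eqc].
  have [/eqP->|/set0Pn[a aA]] := boolP (A == set0); [by left|right].
  have step : forall x, (x, f x) \in A -> (f x, f (f x)) \in A.
    move=> x xA.
    have : 0 < #|[set b in A | b.2 == f x]|.
      by apply/card_gt0P; exists (x, f x); rewrite inE xA eqxx.
    rewrite -(eqP (eqc (f x))) => /card_gt0P[b]; rewrite inE => /andP[bA /eqP b1].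
    have := sub b bA; rewrite inE /D => /eqP b2.
    by rewrite -b1 -b2; case: b bA {b1 b2}.
  have a0 : (a.1, f a.1) \in A.
    have := sub a aA; rewrite inE /D => /eqP <-; by case: a aA.
  have it : forall k, (iter k f a.1, f (iter k f a.1)) \in A.
    by elim=> // k IH; rewrite iterS; apply: step.
  apply/setP=> -[x y]; apply/idP/idP; first by move/sub.
  rewrite inE /D /= => /eqP ->; have [k <-] := conn a.1 x; exact: it.
have ev2 : forall A, eulerian D A -> ~~ odd #|A|.
  by move=> A /EA [->|->]; rewrite ?cards0 // carcs.
rewrite /AT_orientation.
have -> : [set A : {set T * T} | eulerian D A & odd #|A|] = set0.
  by apply/setP=> A; rewrite !inE; apply/negbTE/andP=> [[/ev2 /negbTE ->]].
rewrite cards0 -lt0n; apply/card_gt0P; exists set0; rewrite inE cards0 andbT.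
apply/andP; split; first exact: sub0set.
by apply/forallP=> v; apply/eqP; apply: eq_card => a; rewrite !inE.
Qed.
End Generic.

Section Conc.
Variables n' m' : nat.
Local Notation N := n'.+2.
Local Notation M := m'.+2.
Local Notation adjG := (sumS_adj (path_adj N) (path_adj M)).
Local Notation T := (('I_N + edgeT (path_adj N)) * 'I_M)%type.

Lemma inord_eq (k : nat) (i j : nat) : i < k.+1 -> j < k.+1 ->
  (inord i == inord j :> 'I_k.+1) = (i == j).
Proof. by move=> hi hj; rewrite -val_eqE /= !inordK. Qed.

Lemma edge_ok u : u.+1 < N -> is_edge (path_adj N) [set inord u; inord u.+1].
Proof.
move=> h; apply/existsP; exists (inord u); apply/existsP; exists (inord u.+1).
by rewrite eqxx andbT /path_adj !inordK ?eqxx // ltnW.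
Qed.

Definition e0 : edgeT (path_adj N) := exist (fun e => is_edge (path_adj N) e) _ (@edge_ok 0 isT).
Definition esub u : edgeT (path_adj N) := insubd e0 [set inord u; inord u.+1].
Lemma val_esub u : u.+1 < N -> val (esub u) = [set inord u; inord u.+1].
Proof. by move=> h; rewrite val_insubd edge_ok. Qed.

Definition Vx u w : T := (inl (inord u), inord w).
Definition Sx u w : T := (inr (esub u), inord w).

Lemma adj_sym x y : adjG x y = adjG y x.
Proof.
case: x y => [[u|e] w] [[v|f] z]; rewrite /sumS_adj /= ?(eq_sym w) //.
by rewrite /path_adj (orbC (w.+1 == z)) (eq_sym u).
Qed.

Lemma adjVV u w : u < N -> w.+1 < M -> adjG (Vx u w) (Vx u w.+1).
Proof. by move=> hu hw; rewrite /sumS_adj /= eqxx /path_adj !inordK ?eqxx // ltnW. Qed.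

Lemma adjSV1 u w : u.+1 < N -> w < M -> adjG (Sx u w) (Vx u w).
Proof. by move=> hu hw; rewrite /sumS_adj /= eqxx val_esub // !inE eqxx. Qed.

Lemma adjSV2 u w : u.+1 < N -> w < M -> adjG (Sx u w) (Vx u.+1 w).
Proof. by move=> hu hw; rewrite /sumS_adj /= eqxx val_esub // !inE eqxx orbT. Qed.


Definition rk (x : T) : nat := match x.1 with inl _ => (x.2 : nat).+1 | inr _ => 0 end.

Lemma rk_neq x y : adjG x y -> rk x != rk y.
Proof.
case: x y => [[u|e] w] [[v|f] z]; rewrite /sumS_adj /rk /= ?andbF ?orbF //.
by case/andP=> _ /orP[] /eqP <-; apply/eqP; lia.
Qed.

Definition Drk (x y : T) := adjG x y && (rk x < rk y).

Lemma Drk_outdeg x : outdeg Drk x < 3.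
Proof.
rewrite /outdeg; case: x => [[u|e] w].
  apply: (@leq_ltn_trans #|[set ((inl u, inord w.+1) : T)]|); last by rewrite cards1.
  apply: subset_leq_card; apply/subsetP => -[[v|f] z]; rewrite !inE /Drk /sumS_adj /rk /= ?andbF ?orbF //.
  case/andP=> /andP[/eqP <- /orP[/eqP wz|/eqP zw]] lt; last by lia.
  by rewrite xpair_eqE eqxx /=; apply/eqP/val_inj; rewrite /= inordK wz // ltn_ord.
case/existsP: (valP e) => a /existsP[b /andP[_ /eqP eab]].
apply: (@leq_ltn_trans #|[set ((inl a, w) : T); (inl b, w)]|); last by rewrite cards2; case: (_ != _).
apply: subset_leq_card; apply/subsetP => -[[v|f] z]; rewrite !inE /Drk /sumS_adj /rk /= ?andbF ?orbF //.
rewrite eab !inE => /andP[/andP[/eqP <- /orP[] /eqP -> ] _]; by rewrite eqxx ?orbT.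
Qed.

Lemma upper3 : has_AT_orientation_lt adjG 3.
Proof.
exists Drk; split; first exact: rank_orient adj_sym rk_neq.
split; last exact: Drk_outdeg.
by apply: (@rank_AT _ _ rk) => x y /andP[].
Qed.


Definition psiA (x : T) : nat := match x.1 with inl u => 3 * u + x.2 | inr _ => 6 + x.2 end.
Definition psiB (x : T) : nat := match x.1 with
  | inl u => u + 3 * x.2
  | inr e => 6 + 2 * x.2 + (if inord 0 \in val e then 0 else 1) end.

Lemma psiAV u w : u < N -> w < M -> psiA (Vx u w) = 3 * u + w.
Proof. by move=> hu hw; rewrite /psiA /Vx /= !inordK. Qed.
Lemma psiAS u w : w < M -> psiA (Sx u w) = 6 + w.
Proof. by move=> hw; rewrite /psiA /Sx /= !inordK. Qed.
Lemma psiBV u w : u < N -> w < M -> psiB (Vx u w) = u + 3 * w.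
Proof. by move=> hu hw; rewrite /psiB /Vx /= !inordK. Qed.
Lemma psiBS0 w : w < M -> psiB (Sx 0 w) = 6 + 2 * w.
Proof. by move=> hw; rewrite /psiB /Sx /= val_esub // !inE eqxx /= !inordK ?addn0. Qed.
Lemma psiBS1 w : 2 < N -> w < M -> psiB (Sx 1 w) = 7 + 2 * w.
Proof.
move=> hn hw; rewrite /psiB /Sx /= val_esub // !inE !inord_eq //= !inordK //.
by rewrite addn1.
Qed.

Local Arguments Vx : simpl never.
Local Arguments Sx : simpl never.
Local Arguments psiA : simpl never.
Local Arguments psiB : simpl never.
Local Arguments sumS_adj : simpl never.
Local Opaque Vx Sx.

Lemma lowerA D : 0 < m' -> is_orientation adjG D -> (forall x, outdeg D x < 2) -> False.
Proof.
move=> hm oD od.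
pose E := [:: (Vx 0 0, Vx 0 1); (Vx 0 1, Vx 0 2); (Vx 1 0, Vx 1 1); (Vx 1 1, Vx 1 2);
  (Sx 0 0, Vx 0 0); (Sx 0 0, Vx 1 0); (Sx 0 1, Vx 0 1); (Sx 0 1, Vx 1 1);
  (Sx 0 2, Vx 0 2); (Sx 0 2, Vx 1 2)].
pose Vs := [:: Vx 0 0; Vx 0 1; Vx 0 2; Vx 1 0; Vx 1 1; Vx 1 2; Sx 0 0; Sx 0 1; Sx 0 2].
apply: (@pigeon _ adjG D psiA E Vs oD od) => //.
- apply/allP; rewrite /= !adjVV ?adjSV1 ?adjSV2 //; lia.
- by apply/allP; rewrite /E /Vs /=; move: (Vx 0 0) (Vx 0 1) (Vx 0 2) (Vx 1 0) (Vx 1 1) (Vx 1 2) (Sx 0 0) (Sx 0 1) (Sx 0 2) => *; rewrite !inE ?eqxx ?(orbT, orTb).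
- rewrite /= !psiAV ?psiAS //; lia.
Qed.



Lemma lowerB D : 0 < n' -> is_orientation adjG D -> (forall x, outdeg D x < 2) -> False.
Proof.
move=> hn oD od.
pose E := [:: (Vx 0 0, Vx 0 1); (Vx 1 0, Vx 1 1); (Vx 2 0, Vx 2 1);
  (Sx 0 0, Vx 0 0); (Sx 0 0, Vx 1 0); (Sx 1 0, Vx 1 0); (Sx 1 0, Vx 2 0);
  (Sx 0 1, Vx 0 1); (Sx 0 1, Vx 1 1); (Sx 1 1, Vx 1 1); (Sx 1 1, Vx 2 1)].
pose Vs := [:: Vx 0 0; Vx 1 0; Vx 2 0; Vx 0 1; Vx 1 1; Vx 2 1; Sx 0 0; Sx 1 0; Sx 0 1; Sx 1 1].
apply: (@pigeon _ adjG D psiB E Vs oD od); last by [].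
- apply/allP; rewrite /E /= !adjVV ?adjSV1 ?adjSV2 //; lia.
- by apply/allP; rewrite /E /Vs /=; move: (Vx 0 0) (Vx 1 0) (Vx 2 0) (Vx 0 1) (Vx 1 1) (Vx 2 1) (Sx 0 0) (Sx 1 0) (Sx 0 1) (Sx 1 1) => *; rewrite !inE ?eqxx ?(orbT, orTb).
- rewrite /E /= !psiBV ?psiBS0 ?psiBS1 //; lia.
Qed.

End Conc.

Local Notation adjG := (sumS_adj (path_adj 2) (path_adj 2)).
Local Notation T := (('I_2 + edgeT (path_adj 2)) * 'I_2)%type.

Definition code (x : T) : nat := match x.1 with
  | inl u => if (u : nat) == 0 then (x.2 : nat) else 4 - x.2
  | inr _ => 5 - 3 * x.2 end.
Definition decode (i : nat) : T := match i with
  | 0 => Vx 0 0 0 0 | 1 => Vx 0 0 0 1 | 2 => Sx 0 0 0 1 | 3 => Vx 0 0 1 1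
  | 4 => Vx 0 0 1 0 | _ => Sx 0 0 0 0 end.

Lemma code_lt x : code x < 6.
Proof. case: x => [[u|e] w]; rewrite /code /=; have := ltn_ord w; try case: ifP => _; lia. Qed.

Lemma decodeK i : i < 6 -> code (decode i) = i.
Proof.
by case: i => [|[|[|[|[|[|]]]]]] // _; rewrite /code /decode /Vx /Sx /= ?inordK.
Qed.

Lemma edge2 (e : edgeT (path_adj 2)) : e = esub 0 0.
Proof.
apply: val_inj; rewrite val_esub //.
case/existsP: (valP e) => u /existsP[v /andP[]].
rewrite /path_adj => uv /eqP ->.
case: u v uv => [[|[|]]] // hu [[|[|]]] // hv //= _; apply/setP=> z;
  rewrite !inE -!val_eqE /= !inordK //; by case: (z : nat) => [|[|]].
Qed.

Lemma codeK x : decode (code x) = x.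
Proof.
case: x => [[u|e] w].
  case: u => [[|[|]]] // hu; case: w => [[|[|]]] // hw;
  rewrite /decode /code /Vx /=; congr (_, _); try congr inl; apply: val_inj; by rewrite /= inordK.
rewrite (edge2 e); case: w => [[|[|]]] // hw; rewrite /decode /code /Sx /=;
  congr (_, _); apply: val_inj; by rewrite /= inordK.
Qed.

Lemma adj_dec i j : i < 6 -> j < 6 ->
  adjG (decode i) (decode j) = (j == (i.+1) %% 6) || (i == (j.+1) %% 6).
Proof.
case: i => [|[|[|[|[|[|]]]]]] // _; case: j => [|[|[|[|[|[|]]]]]] // _;
  rewrite /decode /Vx /Sx /sumS_adj /subdiv_adj /path_adj /= ?val_esub // ?inE ?inord_eq //
   -?val_eqE /= ?inordK //.
Qed.

Definition fcyc (x : T) : T := decode ((code x).+1 %% 6).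

Lemma decode_eq i j : i < 6 -> j < 6 -> (decode i == decode j) = (i == j).
Proof. by move=> hi hj; apply/eqP/eqP => [h|->//]; rewrite -(decodeK hi) -(decodeK hj) h. Qed.

Lemma cyc_orient : is_orientation adjG (fun x y => y == fcyc x).
Proof.
have m6 : forall k, k %% 6 < 6 by move=> k; rewrite ltn_mod.
split=> x y.
  move/eqP ->; rewrite -[x in adjG x _]codeK /fcyc adj_dec ?code_lt //.
  by rewrite eqxx.
rewrite -[x]codeK -[y]codeK /fcyc !decodeK ?code_lt // adj_dec ?code_lt //.
rewrite !decode_eq ?code_lt //.
have := code_lt x; have := code_lt y; move: (code x) (code y) => i j.
by case: i => [|[|[|[|[|[|]]]]]] //; case: j => [|[|[|[|[|[|]]]]]].
Qed.

Lemma iter_cyc k x : iter k fcyc x = decode ((code x + k) %% 6).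
Proof.
elim: k => [|k IH]; first by rewrite addn0 modn_small ?code_lt // codeK.
rewrite iterS IH /fcyc decodeK ?ltn_mod //; congr decode.
lia.
Qed.

Lemma cyc_conn x y : exists k, iter k fcyc x = y.
Proof.
exists (code y + 6 - code x); rewrite iter_cyc.
have hx := code_lt x; have hy := code_lt y.
rewrite addnBA; last lia.
rewrite addnC -addnBA // subnn addn0 -(modnDmr _ 6) modnn addn0 modn_small //.
exact: codeK.
Qed.

Lemma upper2 : has_AT_orientation_lt adjG 2.
Proof.
exists (fun x y => y == fcyc x); split; first exact: cyc_orient.
split.
  apply: cyc_AT; first exact: cyc_conn.
  by rewrite card_prod card_ord muln2 odd_double.
move=> x; rewrite /outdeg.
have -> : [set y | y == fcyc x] = [set fcyc x] by apply/setP=> y; rewrite !inE.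
by rewrite cards1.
Qed.

Theorem corollary3p3 (n m : nat) :
  2 <= n -> 2 <= m ->
  AT_number_is (sumS_adj (path_adj n) (path_adj m))
    (if (n == 2) && (m == 2) then 2 else 3).
Proof.
case: n => [|[|n']] // _; case: m => [|[|m']] // _.
case: n' => [|n']; case: m' => [|m'] /=.
- split; first exact: upper2.
  move=> j hj [D [oD [_ od]]].
  have a := @adjVV 0 0 0 0 isT isT.
  have := oD.2 _ _ a.
  have H : forall x y, D x y -> False.
    move=> x y Dxy; have := od x; rewrite /outdeg.
    have : 0 < #|[set z | D x z]| by apply/card_gt0P; exists y; rewrite inE.
    lia.
  by case E1: (D _ _) => //; [move/H: E1 | case E2: (D _ _) => //; move/H: E2].
- split; first exact: upper3.
  move=> j hj [D [oD [_ od]]]; apply: (@lowerA 0 m'.+1 D) => // x.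
  by have := od x; lia.
- split; first exact: upper3.
  move=> j hj [D [oD [_ od]]]; apply: (@lowerB n'.+1 0 D) => // x.
  by have := od x; lia.
- split; first exact: upper3.
  move=> j hj [D [oD [_ od]]]; apply: (@lowerB n'.+1 m'.+1 D) => // x.
  by have := od x; lia.
Qed.
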